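(* Consider an additive noise model on $d$ real random variables with causal DAG $\mathcal{G}$: $x_i=f_i(\mathrm{pa}(x_i))+\epsilon_i$, with twice differentiable $f_i$ and mutually independent noises i.i.d. with smooth positive density $p^\epsilon$, so that $p(\mathbf{x})=\prod_{i=1}^d p^\epsilon(x_i-f_i(\mathrm{pa}(x_i)))$. Let $x_l$ be a leaf of $\mathcal{G}$, let $p(\mathbf{x}_{-l})=\prod_{i\neq l}p^\epsilon(x_i-f_i(\mathrm{pa}(x_i)))$, and let $\Delta_l=(\delta_j)_{j\neq l}$ with $\delta_j=\frac{\partial}{\partial x_j}\log p(\mathbf{x})-\frac{\partial}{\partial x_j}\log p(\mathbf{x}_{-l})$. Then at every point $\mathbf{x}$ where $H_{l,l}(\log p(\mathbf{x}))\neq 0$, for every $j\neq l$, $$\delta_j = H_{l,j}(\log p(\mathbf{x}))\cdot \frac{\frac{\partial}{\partial x_l}\log p(\mathbf{x})}{H_{l,l}(\log p(\mathbf{x}))},$$ i.e. $\Delta_l = H_l(\log p(\mathbf{x}))\cdot \frac{\nabla_{x_l}\log p(\mathbf{x})}{H_{l,l}(\log p(\mathbf{x}))}$ restricted to the coordinates $j\neq l$.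
   Context: $H(\log p(\mathbf{x}))$ is the Hessian of $\log p$ (the Jacobian of the score $\nabla_{\mathbf{x}}\log p(\mathbf{x})$), $H_{i,j}$ its $(i,j)$ entry and $H_l$ its $l$-th row. $\mathrm{pa}(x_i)$ denotes the parents of $x_i$ in $\mathcal{G}$; a leaf is a node with no children. *)

(* Defs.v *)
From HB Require Import structures.
From mathcomp Require Import all_boot all_order all_algebra.
From mathcomp Require Import all_classical all_reals all_analysis.
Set Implicit Arguments. Unset Strict Implicit. Unset Printing Implicit Defensive.
Import Order.TTheory GRing.Theory Num.Theory.
Import numFieldNormedType.Exports.
Local Open Scope ring_scope.

(* Points x in R^d are row vectors 'rV[R]_d; coordinate i is x ord0 i. *)

Definition pderiv (R : realType) (d : nat) (j : 'I_d)
  (F : 'rV[R]_d -> R) (x : 'rV[R]_d) : R :=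
  derive F x (delta_mx ord0 j).

Definition edge (d : nat) (pa : 'I_d -> {set 'I_d}) : rel 'I_d :=
  fun a b => a \in pa b.

Definition is_dag (d : nat) (pa : 'I_d -> {set 'I_d}) : Prop :=
  forall a b : 'I_d, edge pa a b -> ~~ connect (edge pa) b a.

Definition is_leaf (d : nat) (pa : 'I_d -> {set 'I_d}) (l : 'I_d) : Prop :=
  forall i : 'I_d, l \notin pa i.

Definition depends_only_on (R : realType) (d : nat) (S : {set 'I_d})
  (f : 'rV[R]_d -> R) : Prop :=
  forall x y : 'rV[R]_d, (forall k, k \in S -> x ord0 k = y ord0 k) -> f x = f y.

Definition twice_differentiable (R : realType) (d : nat)
  (f : 'rV[R]_d -> R) : Prop :=
  (forall x, differentiable f x) /\
  (forall (v : 'rV[R]_d) x, differentiable (fun y => derive f y v) x).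

Definition smooth (R : realType) (g : R -> R) : Prop :=
  forall (n : nat) (t : R), derivable (iter n (@derive1 R R) g) t 1.

Definition anm_density (R : realType) (d : nat) (pe : R -> R)
  (f : 'I_d -> 'rV[R]_d -> R) (x : 'rV[R]_d) : R :=
  \prod_(i < d) pe (x ord0 i - f i x).

Definition anm_density_minus (R : realType) (d : nat) (pe : R -> R)
  (f : 'I_d -> 'rV[R]_d -> R) (l : 'I_d) (x : 'rV[R]_d) : R :=
  \prod_(i < d | i != l) pe (x ord0 i - f i x).

Definition log_density (R : realType) (d : nat) (pe : R -> R)
  (f : 'I_d -> 'rV[R]_d -> R) (x : 'rV[R]_d) : R :=
  ln (anm_density pe f x).

Definition hess_log (R : realType) (d : nat) (pe : R -> R)
  (f : 'I_d -> 'rV[R]_d -> R) (i j : 'I_d) (x : 'rV[R]_d) : R :=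
  pderiv j (pderiv i (log_density pe f)) x.

(* Main.v *)
Require Import Defs.
From HB Require Import structures.
From mathcomp Require Import all_boot all_order all_algebra.
From mathcomp Require Import all_classical all_reals all_analysis.
From mathcomp Require Import ring.
Import Order.TTheory GRing.Theory Num.Theory.
Import numFieldNormedType.Exports.
Local Open Scope ring_scope.

Section H.
Context {R : realType}.

Lemma dirE {V : normedModType R} (F : V -> R) x v :
  derive F x v = derive1 (fun h => F (h *: v + x)) 0.
Proof.
rewrite derive1E /derive; have -> : (fun h : R => h^-1 *: (F ((h%:A + 0) *: v + x) - F (0 *: v + x))) = (fun h => h^-1 *: (F (h *: v + x) - F x)); last by [].
  by apply: funext => h; rewrite addr0 scale0r add0r [h%:A]mulr1.
Qed.

Lemma chain {V : normedModType R} (g : R -> R) (u : V -> R) x v :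
  derivable u x v -> derivable g (u x) 1 ->
  derivable (g \o u) x v /\ derive (g \o u) x v = derive1 g (u x) * derive u x v.
Proof.
move=> /derivable1P du dg.
have e0 : (fun h : R => u (h *: v + x)) 0 = u x by rewrite /= scale0r add0r.
have dg' : derivable g ((fun h : R => u (h *: v + x)) 0) 1 by rewrite e0.
split.
  apply/derivable1P; apply/derivable1_diffP.
  apply: (@differentiable_comp _ _ _ _ (fun h : R => u (h *: v + x)) g).
    exact/derivable1_diffP.
  exact/derivable1_diffP.
rewrite dirE (dirE u) -e0.
exact: (@derive1_comp R (fun h : R => u (h *: v + x)) g 0 du dg').
Qed.

Lemma const_dir {V : normedModType R} (F : V -> R) x v :
  (forall h : R, F (h *: v + x) = F x) -> derivable F x v /\ derive F x v = 0.
Proof.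
move=> H; have E : (fun h : R => F (h *: v + x)) = cst (F x) by apply: funext.
split; last by rewrite dirE E derive1_cst.
by apply/derivable1P; rewrite E; exact: derivable_cst.
Qed.

Lemma const_dir0 {V : normedModType R} (F : V -> R) x v :
  (forall h : R, F (h *: v + x) = F x) -> derive F x v = 0.
Proof. by move=> H; have [] := const_dir F x v H. Qed.

Lemma coord {d : nat} (k : 'I_d) (x v : 'rV[R]_d) :
  derivable (fun y : 'rV[R]_d => y ord0 k) x v /\
  derive (fun y : 'rV[R]_d => y ord0 k) x v = v ord0 k.
Proof.
have E : (fun h : R => (h *: v + x) ord0 k) =
   ((@id R) * cst (v ord0 k)) + cst (x ord0 k).
  by apply: funext => h; rewrite !mxE.
have D1 : derivable ((@id R) * cst (v ord0 k)) 0 1.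
  by apply: derivableM; [exact: derivable_id|exact: derivable_cst].
split.
  by apply/derivable1P; rewrite E; apply: derivableD.
rewrite dirE E derive1E deriveD //.
rewrite deriveM //.
by rewrite derive_id !derive_cst scale0r add0r addr0 /= [_%:A]mulr1.
Qed.

Lemma derivable_prod (V : normedModType R) (I : Type) (s : seq I) (P : pred I)
  (F : I -> V -> R) x v :
  (forall i, derivable (F i) x v) ->
  derivable (fun y => \prod_(i <- s | P i) F i y) x v.
Proof.
move=> dF; elim: s => [|i s IH].
  have -> : (fun y => \prod_(i <- [::] | P i) F i y) = cst 1.
    by apply: funext => y; rewrite big_nil.
  exact: derivable_cst.
case Pi: (P i).
  have -> : (fun y => \prod_(j <- i :: s | P j) F j y) =
     (F i) * (fun y => \prod_(j <- s | P j) F j y).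
    by apply: funext => y; rewrite big_cons Pi.
  exact: derivableM.
have -> : (fun y => \prod_(j <- i :: s | P j) F j y) =
     (fun y => \prod_(j <- s | P j) F j y).
  by apply: funext => y; rewrite big_cons Pi.
exact: IH.
Qed.

Lemma derive1_ln {t : R} : 0 < t -> derive1 (@ln R) t = t^-1.
Proof. by move=> t0; rewrite derive1E; exact: (@derive_val _ _ _ _ _ _ _ (is_derive1_ln t0)). Qed.

Lemma derivable_ln {t : R} : 0 < t -> derivable (@ln R) t 1.
Proof. by move=> t0; exact: (@ex_derive _ _ _ _ _ _ _ (is_derive1_ln t0)). Qed.

Lemma coord_e {d : nat} (a k : 'I_d) (h : R) (y : 'rV[R]_d) :
  (h *: delta_mx ord0 a + y) ord0 k = (if a == k then h else 0) + y ord0 k.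
Proof. by rewrite !mxE eqxx /= eq_sym; case: (a == k); rewrite ?mulr1 ?mulr0. Qed.

End H.

Theorem theorem1 (R : realType) (d : nat) (pa : 'I_d -> {set 'I_d})
  (f : 'I_d -> 'rV[R]_d -> R) (pe : R -> R) (l : 'I_d) :
  is_dag pa ->
  (forall i, depends_only_on (pa i) (f i)) ->
  (forall i, twice_differentiable (f i)) ->
  smooth pe ->
  (forall t, 0 < pe t) ->
  measurable_fun setT pe ->
  (\int[lebesgue_measure]_t (pe t)%:E = 1)%E ->
  is_leaf pa l ->
  forall x : 'rV[R]_d,
    hess_log pe f l l x != 0 ->
    forall j : 'I_d, j != l ->
      pderiv j (log_density pe f) x
        - pderiv j (fun y => ln (anm_density_minus pe f l y)) x
      = hess_log pe f l j x
        * (pderiv l (log_density pe f) x / hess_log pe f l l x).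
Proof.
move=> _ Hdep Hf Hpe pos _ _ Hleaf x Hll j jl.
have dpe t : derivable pe t 1 := Hpe 0%N t.
have dpe1 t : derivable (derive1 pe) t 1 := Hpe 1%N t.
pose G := fun t => ln (pe t).
have dG t : derivable G t 1 :=
  (chain (V := R) (@ln R) pe t 1 (dpe t) (derivable_ln (pos t))).1.
have G'E : derive1 G = fun t => (pe t)^-1 * derive1 pe t.
  apply: funext => t.
  rewrite (@derive1_comp R pe (@ln R) t (dpe t) (derivable_ln (pos t))).
  by rewrite derive1_ln.
have dG' t : derivable (derive1 G) t 1.
  rewrite G'E.
  have -> : (fun t => (pe t)^-1 * derive1 pe t) = (fun t => (pe t)^-1) * derive1 pe
    by [].
  apply: derivableM => //; apply: derivableV => //; exact: lt0r_neq0.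
pose U := fun y : 'rV[R]_d => y ord0 l - f l y.
have UE : U = (fun y : 'rV[R]_d => y ord0 l) - f l by [].
have dU y v : derivable U y v.
  rewrite UE; apply: derivableB; first exact: (coord l y v).1.
  exact/diff_derivable/((Hf l).1 y).
have DU y v : derive U y v = v ord0 l - derive (f l) y v.
  rewrite UE deriveB; first by rewrite (coord l y v).2.
    exact: (coord l y v).1.
  exact/diff_derivable/((Hf l).1 y).
have Dfl0 y : derive (f l) y (delta_mx ord0 l) = 0.
  apply: const_dir0 => h; apply: Hdep => k kpa.
  rewrite coord_e; case: eqP => [lk|]; last by rewrite add0r.
  by move: (Hleaf l); rewrite {1}lk kpa.
pose A := fun y => G (U y).
pose B := fun y => ln (anm_density_minus pe f l y).
have dpsi i y v : derivable (fun y : 'rV[R]_d => pe (y ord0 i - f i y)) y v.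
  apply: (chain pe (fun y : 'rV[R]_d => y ord0 i - f i y) y v _ (dpe _)).1.
  have -> : (fun y : 'rV[R]_d => y ord0 i - f i y) =
      (fun y : 'rV[R]_d => y ord0 i) - f i by [].
  apply: derivableB; first exact: (coord i y v).1.
  exact/diff_derivable/((Hf i).1 y).
have Ppos y : 0 < anm_density_minus pe f l y.
  by apply: prodr_gt0 => i _; exact: pos.
have dB y v : derivable B y v.
  apply: (chain (@ln R) (anm_density_minus pe f l) y v _ (derivable_ln (Ppos y))).1.
  rewrite /anm_density_minus; apply: derivable_prod => i; exact: dpsi.
have dA y v : derivable A y v := (chain G U y v (dU y v) (dG (U y))).1.
have LD : log_density pe f = A + B.
  apply: funext => y; rewrite /log_density /anm_density (bigD1 l) //=.
  rewrite lnM //; rewrite posrE; [exact: pos|exact: Ppos].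
have DLD y v : derive (log_density pe f) y v = derive A y v + derive B y v.
  by rewrite LD deriveD.
have DA y v : derive A y v = derive1 G (U y) * derive U y v :=
  (chain G U y v (dU y v) (dG (U y))).2.
have DBl y : derive B y (delta_mx ord0 l) = 0.
  apply: const_dir0 => h; rewrite /B /anm_density_minus; congr ln.
  apply: eq_bigr => i il; congr pe; rewrite coord_e eq_sym (negbTE il) add0r.
  congr (_ - _); apply: Hdep => k kpa; rewrite coord_e.
  case: eqP => [lk|]; last by rewrite add0r.
  by move: (Hleaf i); rewrite lk kpa.
have S : pderiv l (log_density pe f) = fun y => derive1 G (U y).
  apply: funext => y; rewrite /pderiv DLD DBl addr0 DA DU Dfl0 subr0.
  by rewrite mxE !eqxx mulr1.
have H k : hess_log pe f l k x =
    derive1 (derive1 G) (U x) * derive U x (delta_mx ord0 k).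
  rewrite /hess_log S /pderiv.
  exact: (chain (derive1 G) U x _ (dU x _) (dG' (U x))).2.
move: Hll; rewrite !H S /pderiv DLD DA.
rewrite (DU x (delta_mx ord0 l)) Dfl0 mxE !eqxx subr0 mulr1 => Hll.
by rewrite addrK; field.
Qed.
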